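(* Let $f(z)=z\big(1+\sum_{n\ge1}c_nz^n\big)$ be holomorphic and univalent in the unit disc. For $p\ge0$ define coefficients $A_n^p$ ($n\ge1$) by $$z^{1-p}f'(z)+\Lambda_p(f(z))=\sum_{n\ge1}A_n^pz^{n+1}.$$ Then, as an identity of holomorphic functions of $(u,v)$ near $(0,0)$ (equivalently of formal power series in $u,v$), $$\sum_{k\ge1}\sum_{p\ge0}A_k^p\,u^pv^k=\frac{u^2f'(u)^2}{f(u)^2}\,\frac{f(v)^2}{v\,[f(u)-f(v)]}+\frac{vf'(v)}{v-u},$$ where the right-hand side is understood via its holomorphic extension across the diagonal $u=v$ and across $u=0$, $v=0$.
   Context: For $p\ge0$, $\Lambda_p$ denotes the unique function of the form $\Lambda_p(u)=-u^{1-p}+\sum_{j=0}^{p-1}\alpha_ju^{1-j}$ (constants $\alpha_j$ depending on $f$) such that the Laurent expansion at $z=0$ of $z^{1-p}f'(z)+\Lambda_p(f(z))$ contains only powers $z^n$ with $n\ge2$. *)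

(* Defs.v *)
From HB Require Import structures.
From mathcomp Require Import all_boot all_order all_algebra.
Set Implicit Arguments. Unset Strict Implicit. Unset Printing Implicit Defensive.
Import Order.TTheory GRing.Theory Num.Theory.
Local Open Scope ring_scope.

Section Defs.
Variable K : fieldType.

Definition ps := nat -> K.

Definition ps_one : ps := fun n => if n == 0%N then 1 else 0.

Definition ps_mul (s t : ps) : ps := fun n => \sum_(i < n.+1) s i * t (n - i)%N.

Definition ps_pow (s : ps) (m : nat) : ps := iter m (ps_mul s) ps_one.

Fixpoint ps_inv_seq (s : ps) (n : nat) : seq K :=
  match n with
  | 0 => [:: (s 0%N)^-1]
  | n'.+1 => let b := ps_inv_seq s n' in
             rcons b (- (s 0%N)^-1 * \sum_(i < n'.+1) s i.+1 * nth 0 b (n' - i)%N)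
  end.

Definition ps_inv (s : ps) : ps := fun n => nth 0 (ps_inv_seq s n) n.

Definition ps_zpow (s : ps) (m : int) : ps :=
  match m with Posz k => ps_pow s k | Negz k => ps_pow (ps_inv s) k.+1 end.

Definition ps_deriv (s : ps) : ps := fun n => s n.+1 *+ n.+1.

(* coefficient of z^n (n : int) in the Laurent series z^e * s(z) *)
Definition lcoef (e : int) (s : ps) (n : int) : K :=
  match n - e with Posz k => s k | Negz _ => 0 end.

(* f(z) = z * phi(z) with phi(z) = 1 + sum_{n>=1} c_n z^n  (c 0 is unused) *)
Definition phi_ps (c : nat -> K) : ps := fun n => if n is 0%N then 1 else c n.
Definition f_ps (c : nat -> K) : ps :=
  fun n => match n with 0%N => 0 | 1%N => 1 | k.+1 => c k end.

(* coefficient of z^n in the Laurent series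
     z^{1-p} f'(z) + Lambda_p(f(z)),
   Lambda_p(u) = -u^{1-p} + sum_{j<p} alpha_j u^{1-j},
   using f(z)^m = z^m phi(z)^m for m : int. *)
Definition L_coef (c : nat -> K) (p : nat) (alpha : nat -> K) (n : int) : K :=
  lcoef (1 - p%:Z) (ps_deriv (f_ps c)) n
  - lcoef (1 - p%:Z) (ps_zpow (phi_ps c) (1 - p%:Z)) n
  + \sum_(j < p) alpha j * lcoef (1 - (j : nat)%:Z) (ps_zpow (phi_ps c) (1 - (j : nat)%:Z)) n.

(* alpha_0..alpha_{p-1} define Lambda_p: the expansion has only powers z^n, n >= 2 *)
Definition Lambda_spec (c : nat -> K) (p : nat) (alpha : nat -> K) : Prop :=
  forall n : int, n <= 1 -> L_coef c p alpha n = 0.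

Definition Acoef (c : nat -> K) (p : nat) (alpha : nat -> K) (n : nat) : K :=
  L_coef c p alpha (n.+1)%:Z.

(* ---------- two-variable formal power series: S i j = coeff of u^i v^j ---------- *)
Definition bps := nat -> nat -> K.

Definition bmul (S T : bps) : bps := fun i j =>
  \sum_(a < i.+1) \sum_(b < j.+1) S a b * T (i - a)%N (j - b)%N.
Definition badd (S T : bps) : bps := fun i j => S i j + T i j.
Definition bsub (S T : bps) : bps := fun i j => S i j - T i j.
Definition inU (s : ps) : bps := fun i j => if j == 0%N then s i else 0.
Definition inV (s : ps) : bps := fun i j => if i == 0%N then s j else 0.
Definition ps_X : ps := fun n => if n == 1%N then 1 else 0.
Definition bU : bps := inU ps_X.
Definition bV : bps := inV ps_X.

Definition Agen (c : nat -> K) (alpha : nat -> nat -> K) : bps :=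
  fun p k => if k == 0%N then 0 else Acoef c p (alpha p) k.

End Defs.

(* Main.v *)
Require Import Defs.
From HB Require Import structures.
From mathcomp Require Import all_boot all_order all_algebra.
From Stdlib Require Import ClassicalEpsilon FunctionalExtensionality Ring.
Set Implicit Arguments. Unset Strict Implicit. Unset Printing Implicit Defensive.
Import GRing.Theory Num.Theory.
Local Open Scope ring_scope.

Definition cdec (P : Prop) : bool := if excluded_middle_informative P then true else false.
Lemma cdecP (P : Prop) : reflect P (cdec P).
Proof. rewrite /cdec; case: excluded_middle_informative => H; by constructor. Qed.

Definition pser (R : Type) : Type := nat -> R.

Section Classic.
Variable T : Type.
Definition ceq (x y : pser T) : bool := cdec (x = y).
Lemma ceqP : Equality.axiom ceq.
Proof. move=> x y; exact: cdecP. Qed.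
HB.instance Definition _ := hasDecEq.Build (pser T) ceqP.

Definition cfind (P : pred (pser T)) (n : nat) : option (pser T) :=
  match excluded_middle_informative (exists x, P x) with
  | left H => Some (proj1_sig (constructive_indefinite_description _ H))
  | right _ => None end.
Lemma cfind_correct P n x : cfind P n = Some x -> P x.
Proof.
rewrite /cfind; case: excluded_middle_informative => // H [<-].
exact: proj2_sig (constructive_indefinite_description _ H).
Qed.
Lemma cfind_complete (P : pred (pser T)) : (exists x, P x) -> exists n, cfind P n.
Proof. move=> H; exists 0%N; rewrite /cfind; case: excluded_middle_informative => //. Qed.
Lemma cfind_ext (P Q : pred (pser T)) : P =1 Q -> cfind P =1 cfind Q.
Proof. move=> H; have -> : P = Q by apply: functional_extensionality. by []. Qed.
HB.instance Definition _ := hasChoice.Build (pser T) cfind_correct cfind_complete cfind_ext.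
End Classic.

Section PS.
Variable R : comNzRingType.
Implicit Types s t r : pser R.

Definition padd s t : pser R := fun n => s n + t n.
Definition popp s : pser R := fun n => - s n.
Definition pzero : pser R := fun _ => 0.
Definition pone : pser R := fun n => if n == 0%N then 1 else 0.
Definition pmul s t : pser R := fun n => \sum_(i < n.+1) s i * t (n - i)%N.

Lemma paddA : associative padd.
Proof. move=> s t r; apply: functional_extensionality => n; exact: addrA. Qed.
Lemma paddC : commutative padd.
Proof. move=> s t; apply: functional_extensionality => n; exact: addrC. Qed.
Lemma padd0 : left_id pzero padd.
Proof. move=> s; apply: functional_extensionality => n; exact: add0r. Qed.
Lemma paddN : left_inverse pzero popp padd.
Proof. move=> s; apply: functional_extensionality => n; exact: addNr. Qed.
HB.instance Definition _ := GRing.isZmodule.Build (pser R) paddA paddC padd0 paddN.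

Lemma pmul_rev s t n : pmul s t n = \sum_(j < n.+1) s (n - j)%N * t j.
Proof.
rewrite /pmul (reindex_inj rev_ord_inj) /=.
by apply: eq_bigr => j _; rewrite (sub_ordK j).
Qed.

Lemma pmulA : associative pmul.
Proof.
move=> p q r; apply: functional_extensionality => i.
rewrite [RHS]pmul_rev {1}/pmul.
pose coef3 j k := p j * (q (i - j - k)%N * r k).
transitivity (\sum_(j < i.+1) \sum_(k < i.+1 | (k <= i - j)%N) coef3 j k).
  apply: eq_bigr => /= j _; rewrite pmul_rev big_distrr /=.
  by rewrite (big_ord_narrow_leq (leq_subr _ _)).
rewrite (exchange_big_dep predT) //=; apply: eq_bigr => k _.
transitivity (\sum_(j < i.+1 | (j <= i - k)%N) coef3 j k).
  apply: eq_bigl => j; rewrite -ltnS -(ltnS j) -!subSn ?leq_ord //.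
  by rewrite -subn_gt0 -(subn_gt0 j) -!subnDA addnC.
rewrite (big_ord_narrow_leq (leq_subr _ _)) /pmul big_distrl /=.
by apply: eq_bigr => j _; rewrite /coef3 -!subnDA addnC mulrA.
Qed.

Lemma pmulC : commutative pmul.
Proof.
move=> s t; apply: functional_extensionality => n; rewrite pmul_rev /pmul.
by apply: eq_bigr => j _; rewrite mulrC.
Qed.

Lemma pmul1 : left_id pone pmul.
Proof.
move=> p; apply: functional_extensionality => i; rewrite /pmul big_ord_recl subn0.
by rewrite big1 => [|j _]; rewrite /pone /= ?mul1r ?mul0r ?addr0.
Qed.

Lemma pmulDl : left_distributive pmul padd.
Proof.
move=> p q r; apply: functional_extensionality => i; rewrite /pmul /padd -big_split.
by apply: eq_bigr => j _; rewrite mulrDl.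
Qed.

Lemma pone_neq0 : pone != 0.
Proof.
apply/eqP => /(congr1 (fun f : pser R => f 0%N)); rewrite /pone /=.
by move/eqP; rewrite oner_eq0.
Qed.

HB.instance Definition _ := GRing.Zmodule_isComNzRing.Build (pser R) pmulA pmulC pmul1 pmulDl pone_neq0.

End PS.


Section Gen.
Variable R : comNzRingType.
Implicit Types s t : pser R.

Lemma pfeq s t : (forall n, s n = t n) -> s = t.
Proof. move=> H; exact: functional_extensionality. Qed.

Lemma paddE s t n : (s + t) n = s n + t n. Proof. by []. Qed.
Lemma poppE s n : (- s) n = - s n. Proof. by []. Qed.
Lemma psubE s t n : (s - t) n = s n - t n. Proof. by []. Qed.
Lemma pzeroE n : (0 : pser R) n = 0. Proof. by []. Qed.
Lemma poneE n : (1 : pser R) n = if n == 0%N then 1 else 0. Proof. by []. Qed.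
Lemma pmulE s t n : (s * t) n = \sum_(i < n.+1) s i * t (n - i)%N. Proof. by []. Qed.

Lemma psumE (I : Type) (r : seq I) (P : pred I) (F : I -> pser R) n :
  (\sum_(i <- r | P i) F i) n = \sum_(i <- r | P i) F i n.
Proof.
apply: (big_rec2 (fun (y : pser R) (x : R) => y n = x)) => //.
by move=> i y x _ <-.
Qed.

Definition pC (a : R) : pser R := fun n => if n == 0%N then a else 0.
Definition pX : pser R := fun n => if n == 1%N then 1 else 0.

Lemma pCmulE a s n : (pC a * s) n = a * s n.
Proof.
rewrite pmulE big_ord_recl /= subn0 big1 ?addr0 // => i _.
by rewrite /pC /= mul0r.
Qed.

Lemma pC_mul a b : pC (a * b) = pC a * pC b.
Proof. apply: pfeq => n; rewrite pCmulE /pC; case: (n == 0%N); rewrite ?mulr0 //. Qed.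
Lemma pC_add a b : pC (a + b) = pC a + pC b.
Proof. apply: pfeq => n; rewrite paddE /pC; case: (n == 0%N); rewrite ?addr0 //. Qed.
Lemma pC_opp a : pC (- a) = - pC a.
Proof. apply: pfeq => n; rewrite poppE /pC; case: (n == 0%N); rewrite ?oppr0 //. Qed.
Lemma pC_sub a b : pC (a - b) = pC a - pC b.
Proof. by rewrite pC_add pC_opp. Qed.
Lemma pC1 : pC 1 = 1. Proof. by []. Qed.
Lemma pC0 : pC 0 = 0. Proof. apply: pfeq => n; rewrite /pC; by case: (n == 0%N). Qed.
Lemma pC_expr a k : pC (a ^+ k) = pC a ^+ k.
Proof. elim: k => [|k IH]; by rewrite ?expr0 ?pC1 // !exprS pC_mul IH. Qed.
Lemma pC_sum (I : Type) (r : seq I) (P : pred I) (F : I -> R) :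
  pC (\sum_(i <- r | P i) F i) = \sum_(i <- r | P i) pC (F i).
Proof.
apply: (big_rec2 (fun (x : R) (y : pser R) => pC x = y)); first by rewrite pC0.
by move=> i a y _ <-; rewrite pC_add.
Qed.

Lemma pXmulE s n : (pX * s) n = if n is k.+1 then s k else 0.
Proof.
case: n => [|n]; rewrite pmulE.
  by rewrite big_ord1 /pX /= mul0r.
rewrite big_ord_recl /= big_ord_recl /= big1 ?addr0 => [|i _].
  by rewrite /pX /= mul0r mul1r add0r subSS subn0.
by rewrite /pX /= mul0r.
Qed.

Lemma pXnmulE m s n : (pX ^+ m * s) n = if (m <= n)%N then s (n - m)%N else 0.
Proof.
elim: m n => [|m IH] n; first by rewrite expr0 mul1r subn0.
rewrite exprS -mulrA pXmulE; case: n => [|n] //; by rewrite IH ltnS subSS.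
Qed.

Lemma pXcancel s t : pX * s = pX * t -> s = t.
Proof. move=> H; apply: pfeq => n; move/(congr1 (fun u : pser R => u n.+1)): H. by rewrite !pXmulE. Qed.

Lemma pmul0E s t : (s * t) 0%N = s 0%N * t 0%N.
Proof. by rewrite pmulE big_ord1. Qed.
Lemma pexpr0E s k : (s ^+ k) 0%N = s 0%N ^+ k.
Proof. elim: k => [|k IH]; by rewrite ?expr0 // !exprS pmul0E IH. Qed.

Fixpoint pinv_seq (b : R) (s : pser R) (n : nat) : seq R :=
  match n with
  | 0 => [:: b]
  | n'.+1 => let l := pinv_seq b s n' in
             rcons l (- b * \sum_(i < n'.+1) s i.+1 * nth 0 l (n' - i)%N)
  end.
Definition pinvw (b : R) (s : pser R) : pser R := fun n => nth 0 (pinv_seq b s n) n.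

Lemma size_pinv_seq b s n : size (pinv_seq b s n) = n.+1.
Proof. elim: n => [|n IH] //=; by rewrite size_rcons IH. Qed.

Lemma nth_pinv_seq b s n k : (k <= n)%N -> nth 0 (pinv_seq b s n) k = pinvw b s k.
Proof.
elim: n => [|n IH]; first by rewrite leqn0 => /eqP ->.
rewrite leq_eqVlt => /orP [/eqP -> //|]; rewrite ltnS => Hk /=.
by rewrite nth_rcons size_pinv_seq ltnS Hk IH.
Qed.

Lemma pinvwP b s : b * s 0%N = 1 -> pinvw b s * s = 1.
Proof.
move=> Hb; rewrite mulrC; apply: pfeq => n; rewrite poneE; case: n => [|n] /=.
  by rewrite pmul0E /pinvw /= mulrC Hb.
rewrite pmulE big_ord_recl /= subn0.
have -> : pinvw b s n.+1 = - b * \sum_(i < n.+1) s i.+1 * pinvw b s (n - i)%N.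
  rewrite /pinvw /= nth_rcons size_pinv_seq ltnn eqxx; congr (_ * _).
  by apply: eq_bigr => i _; rewrite nth_pinv_seq // leq_subr.
rewrite mulrA mulrN (mulrC (s 0%N)) Hb mulN1r.
rewrite [X in - X + _](_ : _ = \sum_(i < n.+1) s (bump 0 i) * pinvw b s (n.+1 - bump 0 i)%N).
  by rewrite addNr.
by apply: eq_bigr => i _; rewrite /bump /= add1n subSS.
Qed.

Lemma pscancel (a b s t : pser R) : t * s = 1 -> a * s = b * s -> a = b.
Proof.
move=> Ht H; have E x : x = x * s * t by rewrite -mulrA (mulrC s) Ht mulr1.
by rewrite (E a) (E b) H.
Qed.

End Gen.
Arguments pX {R}.


Section Two.
Variable R : comNzRingType.
Local Notation P := (pser R).
Local Notation PP := (pser (pser R)).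
Implicit Types s t : P.
Implicit Types S T : PP.

Definition plift s : PP := fun n => pC (s n).

Lemma lift_mul s t : plift (s * t) = plift s * plift t.
Proof.
apply: pfeq => n; rewrite pmulE /plift pmulE pC_sum.
by apply: eq_bigr => i _; rewrite pC_mul.
Qed.
Lemma lift_add s t : plift (s + t) = plift s + plift t.
Proof. by apply: pfeq => n; rewrite /plift paddE pC_add. Qed.
Lemma lift_opp s : plift (- s) = - plift s.
Proof. by apply: pfeq => n; rewrite /plift poppE pC_opp. Qed.
Lemma lift_sub s t : plift (s - t) = plift s - plift t.
Proof. by rewrite lift_add lift_opp. Qed.
Lemma lift1 : plift 1 = 1.
Proof. apply: pfeq => n; rewrite /plift !poneE; case: (n == 0%N) => //; exact: pC0. Qed.
Lemma lift_expr s k : plift (s ^+ k) = plift s ^+ k.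
Proof. elim: k => [|k IH]; by rewrite ?expr0 ?lift1 // !exprS lift_mul IH. Qed.
Lemma liftX : plift pX = pX.
Proof. apply: pfeq => n; rewrite /plift /pX; case: (n == 1%N) => //; exact: pC0. Qed.

Definition psig S : PP := fun n => pX ^+ n * S n.

Lemma sig_mul S T : psig (S * T) = psig S * psig T.
Proof.
apply: pfeq => n; rewrite /psig !pmulE big_distrr; apply: eq_bigr => i _ /=.
by rewrite mulrACA -exprD subnKC // -ltnS.
Qed.
Lemma sig_add S T : psig (S + T) = psig S + psig T.
Proof. by apply: pfeq => n; rewrite /psig !paddE mulrDr. Qed.
Lemma sig_opp S : psig (- S) = - psig S.
Proof. by apply: pfeq => n; rewrite /psig !poppE mulrN. Qed.
Lemma sig_sub S T : psig (S - T) = psig S - psig T.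
Proof. by rewrite sig_add sig_opp. Qed.
Lemma sig1 : psig 1 = 1.
Proof. apply: pfeq => n; rewrite /psig !poneE; case: n => [|n] /=; by rewrite ?mulr1 ?mulr0. Qed.
Lemma sig_expr S k : psig (S ^+ k) = psig S ^+ k.
Proof. elim: k => [|k IH]; by rewrite ?expr0 ?sig1 // !exprS sig_mul IH. Qed.
Lemma sig_pC s : psig (pC s) = pC s.
Proof. apply: pfeq => n; rewrite /psig /pC; case: n => [|n] /=; by rewrite ?mul1r ?mulr0. Qed.
Lemma sig_X : psig pX = pX * pC pX.
Proof.
apply: pfeq => n; rewrite /psig pXmulE /pX; case: n => [|[|n]] /=; by rewrite ?mulr0 ?expr1 ?mulr1.
Qed.

Definition rows s : PP := fun _ => s.
Lemma rowsE s : rows s * (1 - pX) = pC s.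
Proof.
apply: pfeq => n; rewrite mulrBr mulr1 psubE mulrC pXmulE /rows /pC.
case: n => [|n] /=; by rewrite ?subr0 ?subrr.
Qed.

Lemma ppCmulE (a : P) S n : (pC a * S) n = a * S n.
Proof. exact: pCmulE. Qed.

Definition Dg S : P := fun n => \sum_(i < n.+1) S i (n - i)%N.
Definition Qd S : PP := fun i j => \sum_(a < i.+1) S a (i + j + 1 - a)%N.

Lemma VUmulE S i j : ((pC pX - pX) * S) i j =
  (if j is j'.+1 then S i j' else 0) - (if i is i'.+1 then S i' j else 0).
Proof.
rewrite mulrBl psubE psubE ppCmulE pXmulE pXmulE; congr (_ - _).
by case: i.
Qed.

Lemma DgL S : S = plift (Dg S) + (pC pX - pX) * Qd S.
Proof.
apply: pfeq => i; apply: pfeq => j; rewrite paddE paddE VUmulE /plift /pC /Dg /Qd.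
case: i => [|i]; case: j => [|j] /=.
- by rewrite big_ord1 subr0 addr0.
- by rewrite big_ord1 add0r subr0 add0n addn1 subn0.
- rewrite add0r big_ord_recr /= subnn addn0 addn1.
  by rewrite [X in X + _ - _](eq_bigr (fun a : 'I_i.+1 => S a (i.+1 - a)%N)) // addrAC subrr add0r.
- rewrite add0r big_ord_recr /=.
  have -> : (i.+1 + j + 1 - i.+1 = j.+1)%N by rewrite addn1 -addnS addKn.
  rewrite [X in X + _ - _](eq_bigr (fun a : 'I_i.+1 => S a (i + j.+1 + 1 - a)%N)).
    by rewrite addrAC subrr add0r.
  move=> a _; by rewrite !addSn !addnS.
Qed.

Definition Hs s : PP := fun i j => s (i + j + 1)%N.

Lemma HsE s : (pC pX - pX) * Hs s = pC s - plift s.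
Proof.
apply: pfeq => i; apply: pfeq => j; rewrite VUmulE psubE psubE /plift /pC /Hs.
case: i => [|i]; case: j => [|j] /=.
- by rewrite !subrr.
- by rewrite add0n addn1.
- by rewrite pzeroE addn0 addn1.
- by rewrite pzeroE subr0 addSn !addnS !addn0 subrr.
Qed.

Lemma Dg_Hs s n : Dg (Hs s) n = s n.+1 *+ n.+1.
Proof.
rewrite /Dg /Hs (eq_bigr (fun _ => s n.+1)) ?sumr_const ?card_ord //.
by move=> i _; rewrite subnKC ?addn1 // -ltnS.
Qed.

Lemma Dg_pC s : Dg (pC s) = s.
Proof.
apply: pfeq => n; rewrite /Dg big_ord_recl /= subn0 big1 ?addr0 // => i _.
Qed.

End Two.


Section K1.
Variable K : fieldType.
Variable c : nat -> K.
Local Notation P1 := (pser K).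
Local Notation x := (pX : P1).

Definition phi : P1 := phi_ps c.
Definition ff : P1 := f_ps c.
Definition df : P1 := ps_deriv (f_ps c).
Definition II : P1 := ps_inv (phi_ps c).

Lemma ff_eq : ff = x * phi.
Proof. apply: pfeq => n; rewrite pXmulE /ff /phi /f_ps /phi_ps; by case: n => [|[|n]]. Qed.

Lemma phi0 : phi 0%N = 1. Proof. by []. Qed.

Lemma ps_inv_seqE (s : P1) n : ps_inv_seq s n = pinv_seq (s 0%N)^-1 s n.
Proof. elim: n => [|n IH] //=; by rewrite IH. Qed.

Lemma II_mul : II * phi = 1.
Proof.
have -> : II = pinvw (phi 0%N)^-1 phi.
  by apply: pfeq => n; rewrite /II /pinvw /ps_inv ps_inv_seqE.
by apply: pinvwP; rewrite phi0 invr1 mulr1.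
Qed.

Lemma II0 : II 0%N = 1.
Proof. by move/(congr1 (fun s : P1 => s 0%N)): II_mul; rewrite pmul0E phi0 mulr1. Qed.

Lemma ps_powE (s : P1) m : ps_pow s m = s ^+ m.
Proof. elim: m => [|m IH] //; by rewrite exprS -IH. Qed.

Definition zp (m : nat) : P1 := if m is m'.+1 then II ^+ m' else phi.

Lemma ps_zpowE m : ps_zpow (phi_ps c) (1 - m%:Z) = zp m.
Proof.
case: m => [|[|m]].
- exact: (mulr1 (phi_ps c : P1)).
- by rewrite subrr.
- have -> : (1 - (m.+2)%:Z) = Negz m.
    by rewrite NegzE -addn1 PoszD opprD addrC addrK -addn1.
  by rewrite /= ps_powE exprS.
Qed.

Lemma zp0 m : zp m 0%N = 1.
Proof. case: m => [|m] //=; by rewrite pexpr0E II0 expr1n. Qed.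

Lemma IIzp m : II * zp m = zp m.+1.
Proof. case: m => [|m] /=; by rewrite ?II_mul // -exprS. Qed.

Definition ebas (p m : nat) : P1 := x ^+ (p - m) * zp m.
Definition inspan (p : nat) (y : P1) := exists b : nat -> K, y = \sum_(m < p) pC (b m) * ebas p m.

Lemma inspan0 p : inspan p 0.
Proof. exists (fun _ => 0); rewrite big1 // => m _; by rewrite pC0 mul0r. Qed.
Lemma inspanD p y z : inspan p y -> inspan p z -> inspan p (y + z).
Proof.
move=> [b ->] [b' ->]; exists (fun m => b m + b' m); rewrite -big_split /=.
by apply: eq_bigr => m _; rewrite pC_add mulrDl.
Qed.
Lemma inspanC p a y : inspan p y -> inspan p (pC a * y).
Proof.
move=> [b ->]; exists (fun m => a * b m); rewrite big_distrr /=.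
by apply: eq_bigr => m _; rewrite pC_mul mulrA.
Qed.
Lemma inspanN p y : inspan p y -> inspan p (- y).
Proof. move=> H; rewrite -mulN1r -pC1 -pC_opp; exact: inspanC. Qed.
Lemma inspanB p y z : inspan p y -> inspan p z -> inspan p (y - z).
Proof. by move=> Hy Hz; apply: inspanD => //; apply: inspanN. Qed.
Lemma inspan_sum p n (F : 'I_n -> P1) : (forall i, inspan p (F i)) -> inspan p (\sum_(i < n) F i).
Proof.
move=> H; elim/big_ind: _ => //; [exact: inspan0 | by move=> ? ?; apply: inspanD].
Qed.
Lemma inspan_bas p m : (m < p)%N -> inspan p (ebas p m).
Proof.
move=> Hm; exists (fun k => if k == m then 1 else 0).
rewrite (bigD1 (Ordinal Hm)) //= eqxx pC1 mul1r big1 ?addr0 // => i.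
by rewrite -val_eqE /= => /negbTE ->; rewrite pC0 mul0r.
Qed.

Lemma inspan_shift a k y : inspan a y -> inspan (a + k + 1) (II * y * x ^+ k).
Proof.
move=> [b ->]; rewrite big_distrr big_distrl /=; apply: inspan_sum => m.
rewrite mulrCA -mulrA; apply: inspanC.
have -> : II * ebas a m * x ^+ k = ebas (a + k + 1) m.+1.
  rewrite /ebas mulrCA IIzp mulrAC -exprD; congr (_ ^+ _ * _).
  by rewrite addn1 subSS addnBAC // ltnW.
by apply: inspan_bas; rewrite addn1 ltnS (leq_trans (ltn_ord m)) // leq_addr.
Qed.

Lemma inspan_uniq p y : inspan p y -> (forall k, (0 < k <= p)%N -> y k = 0) -> y = 0.
Proof.
move=> [b Hy] Hk.
suff Hb : forall m : 'I_p, b m = 0.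
  by rewrite Hy big1 // => m _; rewrite Hb pC0 mul0r.
have key : forall d, (0 < d <= p)%N -> b (p - d)%N = 0.
  elim/ltn_ind => d IH /andP [d0 dp].
  have := Hk d; rewrite d0 dp => /(_ isT); rewrite Hy psumE.
  have md : (p - d < p)%N by rewrite ltn_subrL d0 (leq_trans d0 dp).
  rewrite (bigD1 (Ordinal md)) //= big1 ?addr0.
    rewrite pCmulE /ebas pXnmulE subKn // leqnn subnn zp0 mulr1 => -> //.
  move=> i; rewrite -val_eqE /= => Hi; rewrite pCmulE /ebas pXnmulE.
  case: leqP => Hle; last by rewrite mulr0.
  have Hlt : (p - i < d)%N.
    rewrite ltn_neqAle Hle andbT; apply: contra Hi => /eqP <-.
    by rewrite subKn // ltnW.
  rewrite -[nat_of_ord i](subKn (ltnW (ltn_ord i))) IH ?mul0r //.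
  by rewrite subn_gt0 ltn_ord leq_subr.
move=> m; rewrite -[nat_of_ord m](subKn (ltnW (ltn_ord m))); apply: key.
by rewrite subn_gt0 ltn_ord leq_subr.
Qed.

End K1.


Lemma i1 (k p j : nat) : (k%:Z + 1 - p%:Z) - (1 - j%:Z) = (k + j)%:Z - p%:Z.
Proof. by rewrite opprB addrAC addrACA subrr addr0 PoszD. Qed.
Lemma i2 (k p : nat) : (k.+1)%:Z = (k + p)%:Z + 1 - p%:Z.
Proof. by rewrite PoszD addrAC addrK -addn1 PoszD. Qed.
Lemma i3 (k p : nat) : (k <= p)%N -> k%:Z + 1 - p%:Z <= 1.
Proof. move=> H; rewrite lerBlDr addrC lerD2l lez_nat //. Qed.
Lemma i4 (a p : nat) : (a < p)%N -> exists q, a%:Z - p%:Z = Negz q.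
Proof.
move=> H; exists (p - a).-1; rewrite NegzE prednK ?subn_gt0 // -opprB subzn // ltnW //.
Qed.

Section K2.
Variable K : fieldType.
Variable c : nat -> K.
Local Notation P1 := (pser K).
Local Notation x := (pX : P1).
Local Notation phi := (phi c).
Local Notation df := (df c).
Local Notation II := (II c).
Local Notation zp := (zp c).
Local Notation ebas := (ebas c).

Definition Pp (p : nat) (al : nat -> K) : P1 :=
  df - zp p + \sum_(j < p) pC (al j) * ebas p j.

Lemma lcoef_shift (s : P1) p j k : (j <= p)%N ->
  lcoef (1 - j%:Z) s (k%:Z + 1 - p%:Z) = (x ^+ (p - j) * s) k.
Proof.
move=> Hj; rewrite /lcoef i1 pXnmulE leq_subLR addnC.
case: leqP => H.
  by rewrite subzn // subnBA // addnC.
by have [q ->] := i4 H.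
Qed.

Lemma LcoefE p al k : L_coef c p al (k%:Z + 1 - p%:Z) = Pp p al k.
Proof.
rewrite /L_coef /Pp !lcoef_shift // subnn expr0 !mul1r ps_zpowE.
rewrite paddE psubE psumE; congr (_ - _ + _); apply: eq_bigr => j _.
by rewrite lcoef_shift ?ps_zpowE 1?ltnW // pCmulE.
Qed.

Lemma spec_vanish p al : Lambda_spec c p al -> forall k, (k <= p)%N -> Pp p al k = 0.
Proof. by move=> H k Hk; rewrite -LcoefE H // i3. Qed.

Lemma AcoefE p al k : Acoef c p al k = Pp p al (k + p)%N.
Proof. by rewrite /Acoef (i2 k p) LcoefE. Qed.

End K2.


Lemma pth (R : comNzRingType) : @ring_theory (pser R) (@pzero R) (@pone R) (@padd R) (@pmul R)
   (fun x y => padd x (popp y)) (@popp R) (@eq (pser R)).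
Proof.
have addE (x y : pser R) : x + y = padd x y by [].
have mulE (x y : pser R) : x * y = pmul x y by [].
have oppE (x : pser R) : - x = popp x by [].
have zeroE : 0 = pzero R by [].
have oneE : 1 = pone R by [].
constructor; move=> *; rewrite -?addE -?mulE -?oppE -?zeroE -?oneE.
- exact: add0r. - exact: addrC. - exact: addrA. - exact: mul1r. - exact: mulrC.
- exact: mulrA. - exact: mulrDl. - by []. - exact: subrr.
Qed.


Section K3.
Variable K : fieldType.
Variable c : nat -> K.
Local Notation P1 := (pser K).
Local Notation P2 := (pser (pser K)).
Local Notation x := (pX : P1).
Local Notation phi := (phi c).
Local Notation df := (df c).
Local Notation ff := (ff c).
Local Notation II := (II c).
Local Notation zp := (zp c).
Local Notation ebas := (ebas c).
Local Notation inspan := (inspan c).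

Definition P2t := pser (pser K).
Definition kadd2 : P2t -> P2t -> P2t := @padd _.
Definition kmul2 : P2t -> P2t -> P2t := @pmul _.
Definition kopp2 : P2t -> P2t := @popp _.
Definition kzero2 : P2t := @pzero _.
Definition kone2 : P2t := @pone _.
Lemma addE2 (a b : P2t) : a + b = kadd2 a b. Proof. by []. Qed.
Lemma mulE2 (a b : P2t) : a * b = kmul2 a b. Proof. by []. Qed.
Lemma oppE2 (a : P2t) : - a = kopp2 a. Proof. by []. Qed.
Lemma zeroE2 : 0 = kzero2 :> P2t. Proof. by []. Qed.
Lemma oneE2 : 1 = kone2 :> P2t. Proof. by []. Qed.
Lemma P2th : @ring_theory P2t kzero2 kone2 kadd2 kmul2 (fun a b => kadd2 a (kopp2 b)) kopp2 (@eq P2t).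
Proof.
constructor; move=> *; rewrite -?addE2 -?mulE2 -?oppE2 -?zeroE2 -?oneE2.
- exact: add0r. - exact: addrC. - exact: addrA. - exact: mul1r. - exact: mulrC.
- exact: mulrA. - exact: mulrDl. - by []. - exact: subrr.
Qed.
Add Ring P2R : P2th.
Definition P1t := pser K.
Definition kadd1 : P1t -> P1t -> P1t := @padd _.
Definition kmul1 : P1t -> P1t -> P1t := @pmul _.
Definition kopp1 : P1t -> P1t := @popp _.
Definition kzero1 : P1t := @pzero _.
Definition kone1 : P1t := @pone _.
Lemma addE1 (a b : P1t) : a + b = kadd1 a b. Proof. by []. Qed.
Lemma mulE1 (a b : P1t) : a * b = kmul1 a b. Proof. by []. Qed.
Lemma oppE1 (a : P1t) : - a = kopp1 a. Proof. by []. Qed.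
Lemma zeroE1 : 0 = kzero1 :> P1t. Proof. by []. Qed.
Lemma oneE1 : 1 = kone1 :> P1t. Proof. by []. Qed.
Lemma P1th : @ring_theory P1t kzero1 kone1 kadd1 kmul1 (fun a b => kadd1 a (kopp1 b)) kopp1 (@eq P1t).
Proof.
constructor; move=> *; rewrite -?addE1 -?mulE1 -?oppE1 -?zeroE1 -?oneE1.
- exact: add0r. - exact: addrC. - exact: addrA. - exact: mul1r. - exact: mulrC.
- exact: mulrA. - exact: mulrDl. - by []. - exact: subrr.
Qed.
Add Ring P1R : P1th.

Ltac mring2 := rewrite ?addE2 ?mulE2 ?oppE2 ?zeroE2 ?oneE2 ?addE1 ?mulE1 ?oppE1 ?zeroE1 ?oneE1;
  match goal with |- @eq _ ?a ?b => change (@eq P2t a b) end; ring.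
Ltac mring1 := rewrite ?addE1 ?mulE1 ?oppE1 ?zeroE1 ?oneE1;
  match goal with |- @eq _ ?a ?b => change (@eq P1t a b) end; ring.


Definition UU : P2 := pX.
Definition VV : P2 := pC x.
Definition dsub (s : P1) : P2 := psig (plift s).
Definition Qq : P2 := pC phi - UU * dsub phi.
Definition gg : P1 := df * df * II * II.
Definition ZZ : P2 := - (dsub gg * pC (phi * phi)).
Definition Qinv : P2 := pinvw II Qq.
Definition YY : P2 := ZZ * Qinv.

Lemma mulpCE (S : P2) (t : P1) n : (S * pC t) n = S n * t.
Proof. by rewrite mulrC ppCmulE mulrC. Qed.

Lemma dsubE s n : dsub s n = x ^+ n * pC (s n).
Proof. by []. Qed.

Lemma Qq0 : Qq 0%N = phi.
Proof. by rewrite /Qq psubE pXmulE subr0. Qed.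

Lemma Qq_succ q : Qq q.+1 = - (x ^+ q * pC (phi q)).
Proof. by rewrite /Qq psubE pXmulE dsubE /pC /= sub0r. Qed.

Lemma Qinv_mul : Qinv * Qq = 1.
Proof. by apply: pinvwP; rewrite Qq0 II_mul. Qed.

Lemma YQ : YY * Qq = ZZ.
Proof. by rewrite /YY -mulrA Qinv_mul mulr1. Qed.

Lemma df0 : df 0%N = 1. Proof. by []. Qed.

Lemma gg0 : gg 0%N = 1.
Proof. by rewrite /gg !pmul0E df0 II0 !mulr1. Qed.

Lemma Zrow p : ZZ p = - (x ^+ p * pC (gg p) * (phi * phi)).
Proof. by rewrite /ZZ poppE mulpCE dsubE. Qed.

Lemma Yrow p : YY p * phi = ZZ p + \sum_(a < p) YY a * (x ^+ (p - a.+1) * pC (phi (p - a.+1)%N)).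
Proof.
have := congr1 (fun S : P2 => S p) YQ; rewrite /= pmulE big_ord_recr /= subnn Qq0 => <-.
rewrite addrAC -big_split /= big1 ?add0r // => a _.
have -> : (p - a = (p - a.+1).+1)%N by rewrite subnS prednK // subn_gt0.
by rewrite Qq_succ mulrN addNr.
Qed.

Lemma Yexp p : YY p = II * ZZ p + \sum_(a < p) II * YY a * (x ^+ (p - a.+1) * pC (phi (p - a.+1)%N)).
Proof.
have -> : YY p = II * (YY p * phi) by rewrite mulrCA II_mul mulr1.
by rewrite Yrow mulrDr big_distrr /=; congr (_ + _); apply: eq_bigr => a _; rewrite mulrA.
Qed.

Lemma Yshape p : inspan p (YY p + zp p).
Proof.
elim/ltn_ind: p => p IH; rewrite Yexp.
case: p IH => [|p] IH.
  rewrite big_ord0 addr0 Zrow expr0 mul1r gg0 pC1 mul1r mulrN mulrA II_mul mul1r /=.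
  by rewrite addNr; apply: inspan0.
rewrite big_ord_recr /= subnn expr0 mul1r phi0 pC1 mulr1.
have E : II * YY p = II * (YY p + zp p) - zp p.+1 by rewrite mulrDr IIzp addrK.
rewrite E -[II ^+ p]/(zp p.+1).
have -> : forall a b d e : P1, a + (b + (d - e)) + e = a + b + d by move=> *; mring1.
apply: inspanD; last first.
  have := inspan_shift 0 (IH p (ltnSn p)); rewrite expr0 mulr1 addn0 addn1; exact.
apply: inspanD.
  have -> : II * ZZ p.+1 = pC (- gg p.+1) * ebas p.+1 0.
    rewrite Zrow /ebas subn0 /= pC_opp; apply/eqP; rewrite -subr_eq0; apply/eqP.
    transitivity (- (x ^+ p.+1 * pC (gg p.+1) * phi) * (II * phi - 1)); first by mring1.
    by rewrite II_mul subrr mulr0.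
  by apply: inspanC; apply: inspan_bas.
apply: inspan_sum => a.
have Ha : (a < p)%N := ltn_ord a.
have -> : II * YY a * (x ^+ (p.+1 - a.+1) * pC (phi (p.+1 - a.+1)%N)) =
   pC (phi (p.+1 - a.+1)%N) * (II * (YY a + zp a) * x ^+ (p.+1 - a.+1) - ebas p.+1 a.+1).
  rewrite /ebas -IIzp; mring1.
apply: inspanC; apply: inspanB.
  have := inspan_shift (p.+1 - a.+1) (IH a (ltnW (ltn_ord a))).
  by rewrite addn1 subSS subnKC // ltnW.
by apply: inspan_bas; rewrite ltnS.
Qed.


Lemma alg_T1 (A B C b h D Q1 Q2 Q3 : P2) :
  A = h + D * Q1 -> B = b + D * Q2 -> C = h + D * Q3 ->
  A * b * C - h * h * B = D * (Q1 * b * h + h * b * Q3 + D * Q1 * b * Q3 - h * h * Q2).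
Proof. move=> -> -> ->; mring2. Qed.

Lemma alg_reg (r Y Z Q s d p D m V U w j : P2) :
  r * (1 - U) - p = 0 -> Y * Q - Z = 0 -> (1 - U) * s - Q = 0 -> Z * d + D * m = 0 ->
  j * (s * d) - 1 = 0 -> p * d * s - D * m - V * (1 - U) * w = 0 ->
  (r + Y) * (s * d * (1 - U) * (1 - U)) = V * (w * j) * (s * d * (1 - U) * (1 - U)).
Proof.
move=> h1 h2 h3 h4 h5 h6; apply/eqP; rewrite -subr_eq0; apply/eqP.
transitivity ((r * (1 - U) - p) * s * d * (1 - U) + Y * ((1 - U) * s - Q) * d * (1 - U)
  + (Y * Q - Z) * d * (1 - U) + (Z * d + D * m) * (1 - U)
  + (1 - U) * (p * d * s - D * m - V * (1 - U) * w)
  - V * w * (1 - U) * (1 - U) * (j * (s * d) - 1)); first by mring2.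
by rewrite h1 h2 h3 h4 h5 h6 !mulr0 !mul0r !addr0 subr0.
Qed.

Definition HH : P2 := Hs ff.
Definition HL : P2 := HH * plift (phi * phi).
Definition JJ : P2 := pinvw II HL.
Definition WW : P2 :=
  let Q1 := Qd (pC df) in let Q2 := Qd (pC (phi * phi)) in let Q3 := Qd HH in
  Q1 * plift (phi * phi) * plift df + plift df * plift (phi * phi) * Q3
  + (VV - UU) * Q1 * plift (phi * phi) * Q3 - plift df * plift df * Q2.

Lemma Dg_HH : Dg HH = df.
Proof. by apply: pfeq => n; rewrite Dg_Hs. Qed.

Lemma T1W : pC df * plift (phi * phi) * HH - plift df * plift df * pC (phi * phi) = (VV - UU) * WW.
Proof.
apply: alg_T1.
- by rewrite {1}(DgL (pC df)) Dg_pC.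
- by rewrite {1}(DgL (pC (phi * phi))) Dg_pC.
- by rewrite {1}(DgL HH) Dg_HH.
Qed.

Lemma HH0 : HH 0%N = phi.
Proof. apply: pfeq => j; rewrite /HH /Hs add0n addn1; by case: j. Qed.

Lemma HL0 : HL 0%N = phi.
Proof. by rewrite /HL pmul0E HH0 /plift pmul0E phi0 mulr1 pC1 mulr1. Qed.

Lemma JJ_mul : JJ * HL = 1.
Proof. by apply: pinvwP; rewrite HL0 II_mul. Qed.

Lemma VVcancel (S T : P2) : VV * S = VV * T -> S = T.
Proof.
move=> H; apply: pfeq => n; apply: pXcancel.
by move/(congr1 (fun X : P2 => X n)): H; rewrite !ppCmulE.
Qed.

Lemma dsub_mul s t : dsub (s * t) = dsub s * dsub t.
Proof. by rewrite /dsub lift_mul sig_mul. Qed.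

Lemma sigVU : psig (VV - UU) = VV * (1 - UU).
Proof. by rewrite sig_sub /VV sig_pC /UU sig_X mulrBr mulr1 mulrC. Qed.

Lemma dsubX : dsub x = UU * VV.
Proof. by rewrite /dsub liftX sig_X. Qed.

Lemma h3 : (1 - UU) * psig HH = Qq.
Proof.
apply: VVcancel; have := congr1 (@psig _) (HsE ff).
rewrite (_ : pC pX - pX = VV - UU) // -/HH sig_mul sigVU sig_sub sig_pC -/(dsub ff).
rewrite ff_eq dsub_mul pC_mul dsubX -/VV => E.
rewrite mulrA E /Qq; mring2.
Qed.

Lemma h4 : ZZ * dsub (phi * phi) = - (dsub df * dsub df * pC (phi * phi)).
Proof.
have G : gg * (phi * phi) = df * df.
  apply/eqP; rewrite -subr_eq0; apply/eqP.
  transitivity (df * df * (II * phi + 1) * (II * phi - 1)); first by rewrite /gg; mring1.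
  by rewrite II_mul subrr mulr0.
have E : dsub gg * dsub (phi * phi) = dsub df * dsub df by rewrite -!dsub_mul G.
apply/eqP; rewrite -subr_eq0; apply/eqP; rewrite /ZZ.
transitivity (- pC (phi * phi) * (dsub gg * dsub (phi * phi) - dsub df * dsub df)); first by mring2.
by rewrite E subrr mulr0.
Qed.

Lemma h5 : psig JJ * (psig HH * dsub (phi * phi)) = 1.
Proof. by rewrite /dsub -!sig_mul -/HL JJ_mul sig1. Qed.

Lemma h6 : pC df * dsub (phi * phi) * psig HH - dsub df * dsub df * pC (phi * phi)
   = VV * (1 - UU) * psig WW.
Proof.
have := congr1 (@psig _) T1W; rewrite sig_sub !sig_mul !sig_pC sigVU -/(dsub _) => <-.
by rewrite -/(dsub df).
Qed.

Definition Pstar : P2 := rows df + YY.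
Definition MM : P2 := WW * JJ.

Lemma Pstar_reg : Pstar = VV * psig MM.
Proof.
set E := psig HH * dsub (phi * phi) * (1 - UU) * (1 - UU).
have Einv : pinvw II E * E = 1.
  apply: pinvwP; rewrite /E !pmul0E -/(dsub _) /dsub /psig expr0 !mul1r HH0.
  by rewrite /plift pmul0E phi0 mulr1 pC1 psubE /UU /pX /= subr0 !mulr1 II_mul.
apply: (pscancel Einv); rewrite /E /Pstar /MM sig_mul.
apply: (alg_reg (Q := Qq) (Z := ZZ) (p := pC df) (D := dsub df * dsub df) (m := pC (phi * phi))).
- by rewrite rowsE subrr.
- by rewrite YQ subrr.
- by rewrite h3 subrr.
- by rewrite h4 addNr.
- by rewrite h5 subrr.
- by rewrite h6 subrr.
Qed.

Lemma Pstar_vanish p k : (k <= p)%N -> Pstar p k = 0.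
Proof.
move=> Hk; rewrite Pstar_reg ppCmulE /psig mulrA -exprS pXnmulE.
  by rewrite ltnNge Hk.
Qed.


Lemma P_eq_Pstar p al : Lambda_spec c p al -> Pp c p al = Pstar p.
Proof.
move=> Hs; apply/eqP; rewrite -subr_eq0; apply/eqP.
apply: (inspan_uniq (p := p)).
  have -> : Pp c p al - Pstar p = \sum_(j < p) pC (al j) * ebas p j - (YY p + zp p).
    by rewrite /Pp /Pstar paddE /rows; mring1.
  apply: inspanB; last exact: Yshape.
  by apply: inspan_sum => j; apply: inspanC; apply: inspan_bas.
move=> k /andP [_ Hk]; by rewrite psubE spec_vanish // Pstar_vanish // subrr.
Qed.

Lemma Agen_eq (alpha : nat -> nat -> K) : (forall p, Lambda_spec c p (alpha p)) ->
  (Agen c alpha : P2) = VV * MM.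
Proof.
move=> Hs; apply: pfeq => p; apply: pfeq => k.
rewrite ppCmulE pXmulE /Agen; case: k => [|k] //=.
rewrite AcoefE P_eq_Pstar // Pstar_reg ppCmulE /psig mulrA -exprS pXnmulE.
  by rewrite addSn ltnS leq_addl subSS addnK.
Qed.

Lemma alg_fin (V U W J H lp pp ld pd : P2) :
  (V - U) * H - (V * pp - U * lp) = 0 ->
  pd * (lp * lp) * H - ld * ld * (pp * pp) - (V - U) * W = 0 ->
  J * (H * (lp * lp)) - 1 = 0 ->
  V * (W * J) * (V * (U * lp * (U * lp) * ((U * lp - V * pp) * (V - U))))
  = U * U * (ld * ld * (V * pp * (V * pp) * (V - U)))
    + V * V * (pd * (U * lp * (U * lp) * (U * lp - V * pp))).
Proof.
move=> e t j; apply/eqP; rewrite -subr_eq0; apply/eqP.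
transitivity (- V * V * U * U * (V - U) * (V - U) * W * (J * (H * (lp * lp)) - 1)
  + V * V * U * U * lp * lp * W * J * (V - U) * ((V - U) * H - (V * pp - U * lp))
  + U * U * V * V * (V - U) * (pd * (lp * lp) * H - ld * ld * (pp * pp) - (V - U) * W)
  - V * V * U * U * pd * lp * lp * ((V - U) * H - (V * pp - U * lp))); first by mring2.
by rewrite e t j !mulr0 !addr0 subr0.
Qed.

End K3.


Section Conv.
Variable K : fieldType.
Local Notation P2 := (pser (pser K)).
Lemma bmulE (S T : P2) : (bmul S T : P2) = S * T.
Proof.
apply: pfeq => i; apply: pfeq => j; rewrite pmulE psumE /bmul.
by apply: eq_bigr => a _; rewrite pmulE.
Qed.
Lemma baddE (S T : P2) : (badd S T : P2) = S + T. Proof. by []. Qed.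
Lemma bsubE (S T : P2) : (bsub S T : P2) = S - T. Proof. by []. Qed.
Lemma inUE (s : pser K) : (inU s : P2) = plift s. Proof. by []. Qed.
Lemma inVE (s : pser K) : (inV s : P2) = pC s.
Proof. apply: pfeq => i; apply: pfeq => j; rewrite /inV /pC; by case: (i == 0%N). Qed.
Lemma bUE : (bU K : P2) = UU K.
Proof.
apply: pfeq => i; apply: pfeq => j; rewrite /bU /inU /UU /pX /ps_X.
case: (i == 1%N); rewrite ?poneE ?pzeroE; by case: (j == 0%N).
Qed.
Lemma bVE : (bV K : P2) = VV K.
Proof. exact: inVE. Qed.
End Conv.

Unset Implicit Arguments.
Theorem theorem3p1 (K : fieldType) (c : nat -> K) (alpha : nat -> nat -> K) :
  (forall p : nat, Lambda_spec c p (alpha p)) ->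
  let fu := inU (f_ps c) in
  let fv := inV (f_ps c) in
  let dfu := inU (ps_deriv (f_ps c)) in
  let dfv := inV (ps_deriv (f_ps c)) in
  let u := bU K in
  let v := bV K in
  bmul (Agen c alpha)
       (bmul v (bmul (bmul fu fu) (bmul (bsub fu fv) (bsub v u))))
  = badd (bmul (bmul u u) (bmul (bmul dfu dfu) (bmul (bmul fv fv) (bsub v u))))
         (bmul (bmul v v) (bmul dfv (bmul (bmul fu fu) (bsub fu fv)))).
Proof.
move=> Hs fu fv dfu dfv u v; rewrite /fu /fv /dfu /dfv /u /v.
rewrite !bmulE !baddE !bsubE !inUE !inVE bUE bVE Agen_eq //.
have Lf : plift (f_ps c : pser K) = UU K * plift (phi c).
  by rewrite -[f_ps c]/(ff c) ff_eq lift_mul liftX.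
have Pf : pC (f_ps c : pser K) = VV K * pC (phi c).
  by rewrite -[f_ps c]/(ff c) ff_eq pC_mul.
rewrite Lf Pf -[ps_deriv (f_ps c)]/(df c) /MM.
apply: (alg_fin (H := HH c)).
- have := HsE (ff c); rewrite -[pC pX - pX]/(VV K - UU K) -/(HH c).
  by rewrite /ff Lf Pf => ->; rewrite subrr.
- by rewrite -lift_mul -pC_mul T1W subrr.
- by rewrite -lift_mul -/(HL c) JJ_mul subrr.
Qed.
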